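(* Let $r\in(R_c,R_0)$ and $\mathcal{F}\in\mathbb{R}$, and define $\kappa(s;r)=2(\mathcal{F}-\sigma(s;r))-(r-R(s))^2$ for $s>s_0$. Then $s\mapsto\kappa(s;r)$ is decreasing on $(s_0,s_-(r))$, increasing on $(s_-(r),s_+(r))$, and decreasing to $-\infty$ on $(s_+(r),+\infty)$.
   Context: Let $\omega:[0,1]\to\mathbb{R}$ be continuous, $\Omega(p)=\int_0^p\omega$, $s_0=\sqrt{\max_{[0,1]}2\Omega}$. For $s>s_0$: $H(p;s)=\int_0^p(s^2-2\Omega(\tau))^{-1/2}d\tau$, $d(s)=H(1;s)$, $R(s)=\tfrac12s^2-\Omega(1)+d(s)$. Let $s_c>s_0$ satisfy $\int_0^1(s_c^2-2\Omega)^{-3/2}dp=1$; $R$ decreases on $(s_0,s_c)$, increases to $+\infty$ on $(s_c,\infty)$; $R_c=R(s_c)$, $R_0=\lim_{s\to s_0+}R(s)\in(R_c,+\infty]$; for $r\in(R_c,R_0)$, $s_-(r)<s_c<s_+(r)$ are the two roots of $R(s)=r$. Also $\sigma(s;r)=\int_0^1\big(\frac{1}{2H_p(p;s)^2}-H(p;s)-\Omega(p)+\Omega(1)+r\big)H_p(p;s)\,dp$. In the paper $\mathcal{F}$ is the flow force constant of a given solution, but the statement holds for any fixed real $\mathcal{F}$. *)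

(* Defs.v *)
From Stdlib Require Import Reals.
From Coquelicot Require Import Coquelicot.
Open Scope R_scope.

Definition Omega (omega : R -> R) (p : R) : R := RInt omega 0 p.

Definition Hp (omega : R -> R) (p s : R) : R := / sqrt (s ^ 2 - 2 * Omega omega p).

Definition H (omega : R -> R) (p s : R) : R := RInt (fun tau => Hp omega tau s) 0 p.

Definition d (omega : R -> R) (s : R) : R := H omega 1 s.

Definition Rfun (omega : R -> R) (s : R) : R :=
  s ^ 2 / 2 - Omega omega 1 + d omega s.

Definition sigma (omega : R -> R) (s r : R) : R :=
  RInt (fun p => (1 / (2 * (Hp omega p s) ^ 2) - H omega p s - Omega omega p
                  + Omega omega 1 + r) * Hp omega p s) 0 1.

Definition kappa (omega : R -> R) (F s r : R) : R :=
  2 * (F - sigma omega s r) - (r - Rfun omega s) ^ 2.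

(* Main.v *)
Require Import Defs.
From Stdlib Require Import Reals Lra Psatz.
From Coquelicot Require Import Coquelicot.
Open Scope R_scope.

Definition clamp (t : R) : R := Rmax 0 (Rmin 1 t).

Lemma clamp_in t : 0 <= clamp t <= 1.
Proof. unfold clamp, Rmax, Rmin; repeat destruct Rle_dec; lra. Qed.

Lemma clamp_id t : 0 <= t <= 1 -> clamp t = t.
Proof. intros; unfold clamp, Rmax, Rmin; repeat destruct Rle_dec; lra. Qed.

Lemma clamp_lip a b : Rabs (clamp a - clamp b) <= Rabs (a - b).
Proof. unfold clamp, Rmax, Rmin; repeat destruct Rle_dec; unfold Rabs; repeat destruct Rcase_abs; lra. Qed.

Lemma clamp_cont x : continuous clamp x.
Proof.
  apply filterlim_locally. intros eps. exists eps. intros y Hy.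
  change (Rabs (clamp y - clamp x) < eps).
  change (Rabs (y - x) < eps) in Hy.
  eapply Rle_lt_trans; [apply clamp_lip| exact Hy].
Qed.

Lemma cont_within (f : R -> R) (P : R -> Prop) x (F : (R -> Prop) -> Prop) :
  filterlim f (within P (locally (x))) (locally (f x)) ->
  forall (h : R -> R), filterlim h F (locally x) -> (forall y, P (h y)) ->
  Filter F ->
  filterlim (fun y => f (h y)) F (locally (f x)).
Proof.
  intros Hf h Hh HP FF Q HQ.
  specialize (Hf Q HQ). unfold filtermap, within in Hf.
  specialize (Hh _ Hf). unfold filtermap in Hh |- *.
  eapply filter_imp; [|exact Hh]. intros y Hy. apply Hy, HP.
Qed.

Lemma sq_gt M y : 0 <= M -> sqrt M < y -> M < y ^ 2.
Proof.
  intros HM Hy. pose proof (sqrt_sqrt M HM). pose proof (sqrt_pos M). nra.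
Qed.

Lemma cont_pt_of (f : R -> R) x : continuous f x -> continuity_pt f x.
Proof. intros; apply continuity_pt_filterlim; exact H. Qed.

Lemma cont_of_pt (f : R -> R) x : continuity_pt f x -> continuous f x.
Proof. intros; apply continuity_pt_filterlim; exact H. Qed.

Lemma param_deriv (w g P dP : R -> R) (M x : R) :
  (forall t, continuous w t) -> (forall t, continuous g t) -> (forall t, g t <= M) ->
  0 <= M -> sqrt M < x ->
  (forall u, 0 < u -> is_derive P u (dP u)) -> (forall u, 0 < u -> continuous dP u) ->
  is_derive (fun s => RInt (fun t => w t * P (s^2 - g t)) 0 1) x
    (RInt (fun t => w t * (2 * x * dP (x^2 - g t))) 0 1).
Proof.
  intros Hw Hg HgM HM Hx HP HdP.
  assert (Hpos : forall y t, sqrt M < y -> 0 < y ^ 2 - g t).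
  { intros y t Hy. pose proof (sq_gt M y HM Hy). specialize (HgM t). lra. }
  assert (Hd : forall y t, sqrt M < y ->
     is_derive (fun u => w t * P (u^2 - g t)) y (w t * (2*y*dP(y^2 - g t)))).
  { intros y t Hy. apply is_derive_scal.
    apply (is_derive_comp P (fun u => u^2 - g t)).
    - apply HP, Hpos, Hy.
    - auto_derive; [easy| ring]. }
  rewrite <- (RInt_ext (fun t => Derive (fun u => w t * P (u ^ 2 - g t)) x)).
  2:{ intros t _. apply is_derive_unique, Hd, Hx. }
  apply (is_derive_RInt_param (fun u t => w t * P (u ^ 2 - g t))).
  - eapply filter_imp; [| apply (open_gt (sqrt M) x Hx)]. intros y Hy t _. eexists. apply Hd, Hy.
  - intros t _.
    apply continuity_2d_pt_ext_loc with (f := fun u v => w v * (2 * u * dP (u * u - g v))).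
    + exists (mkposreal _ (proj2 (Rlt_0_minus _ _) Hx)). intros u v Hu _. simpl in Hu.
      assert (sqrt M < u). { apply Rabs_lt_between in Hu. lra. }
      idtac.
      replace (u * u) with (u ^ 2) by ring. symmetry. apply is_derive_unique. apply (Hd u v H).
    + apply continuity_2d_pt_mult.
      * apply (continuity_1d_2d_pt_comp w (fun u v => v)). apply cont_pt_of, Hw.
        apply continuity_2d_pt_id2.
      * apply continuity_2d_pt_mult.
        -- apply continuity_2d_pt_mult. apply continuity_2d_pt_const. apply continuity_2d_pt_id1.
        -- apply (continuity_1d_2d_pt_comp dP (fun u v => u * u - g v)).
           ++ apply cont_pt_of, HdP. replace (x * x) with (x^2) by ring. apply Hpos, Hx.
           ++ apply continuity_2d_pt_minus.
              ** apply continuity_2d_pt_mult; apply continuity_2d_pt_id1.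
              ** apply (continuity_1d_2d_pt_comp g (fun u v => v)). apply cont_pt_of, Hg.
                 apply continuity_2d_pt_id2.
  - eapply filter_imp; [| apply (open_gt (sqrt M) x Hx)]. intros y Hy.
    apply (ex_RInt_continuous (V := R_CompleteNormedModule)). intros z _.
    apply (continuous_mult w (fun t => P (y^2 - g t))). apply Hw.
    apply (continuous_comp (fun t => y^2 - g t) P).
    + apply (continuous_minus (fun _ => y^2) g). apply continuous_const. apply Hg.
    + apply (ex_derive_continuous (K := R_AbsRing) (V := R_NormedModule) P). eexists. apply HP. apply Hpos, Hy.
Qed.

Lemma weak_decr (f df : R -> R) a b : a <= b ->
  (forall x, a <= x <= b -> is_derive f x (df x)) ->
  (forall x, a <= x <= b -> df x <= 0) -> f b <= f a.
Proof.
  intros Hab Hd Hs.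
  destruct (MVT_gen f a b df) as [c [Hc Heq]].
  - intros x Hx. rewrite Rmin_left in Hx by lra. rewrite Rmax_right in Hx by lra. apply Hd; lra.
  - intros x Hx. rewrite Rmin_left in Hx by lra. rewrite Rmax_right in Hx by lra.
    apply continuity_pt_filterlim.
    apply (ex_derive_continuous (K := R_AbsRing) (V := R_NormedModule) f). eexists; apply Hd; lra.
  - rewrite Rmin_left in Hc by lra. rewrite Rmax_right in Hc by lra.
    specialize (Hs c Hc). nra.
Qed.

Lemma strict_decr (f df : R -> R) a b : a < b ->
  (forall x, a <= x <= b -> is_derive f x (df x)) ->
  (forall x, a <= x <= b -> df x <= 0) -> (forall x, a < x < b -> df x < 0) -> f b < f a.
Proof.
  intros Hab Hd Hs Hss.
  set (m1 := (2*a+b)/3). set (m2 := (a+2*b)/3).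
  assert (f m1 <= f a). { apply (weak_decr f df); unfold m1 in *; intros; try lra; [apply Hd|apply Hs]; lra. }
  assert (f b <= f m2). { apply (weak_decr f df); unfold m2 in *; intros; try lra; [apply Hd|apply Hs]; lra. }
  destruct (MVT_gen f m1 m2 df) as [c [Hc Heq]].
  - intros x Hx. rewrite Rmin_left in Hx by (unfold m1, m2; lra). rewrite Rmax_right in Hx by (unfold m1,m2;lra). apply Hd; unfold m1, m2 in *; lra.
  - intros x Hx. rewrite Rmin_left in Hx by (unfold m1, m2; lra). rewrite Rmax_right in Hx by (unfold m1,m2;lra).
    apply continuity_pt_filterlim.
    apply (ex_derive_continuous (K := R_AbsRing) (V := R_NormedModule) f). eexists; apply Hd; unfold m1, m2 in *; lra.
  - rewrite Rmin_left in Hc by (unfold m1, m2; lra). rewrite Rmax_right in Hc by (unfold m1,m2;lra).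
    assert (df c < 0) by (apply Hss; unfold m1, m2 in *; lra).
    assert (m1 < m2) by (unfold m1, m2; lra). nra.
Qed.

Lemma strict_incr (f df : R -> R) a b : a < b ->
  (forall x, a <= x <= b -> is_derive f x (df x)) ->
  (forall x, a <= x <= b -> 0 <= df x) -> (forall x, a < x < b -> 0 < df x) -> f a < f b.
Proof.
  intros Hab Hd Hs Hss.
  cut (- f b < - f a). lra.
  apply (strict_decr (fun x => - f x) (fun x => - df x)); auto.
  - intros x Hx. apply (is_derive_opp f). auto.
  - intros x Hx. specialize (Hs x Hx). lra.
  - intros x Hx. specialize (Hss x Hx). lra.
Qed.

Definition omc (omega : R -> R) t := omega (clamp t).
Definition Om2 (omega : R -> R) t := RInt (omc omega) 0 t.
Definition Omc (omega : R -> R) t := Om2 omega (clamp t).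


Lemma omc_cont omega
  (Homega : forall x, 0 <= x <= 1 ->
     filterlim omega (within (fun y => 0 <= y <= 1) (locally x)) (locally (omega x))) t :
  continuous (omc omega) t.
Proof.
  unfold omc, continuous.
  apply (cont_within omega (fun y => 0 <= y <= 1) (clamp t) (locally t)).
  - apply Homega, clamp_in.
  - apply clamp_cont.
  - apply clamp_in.
  - apply locally_filter.
Qed.

Lemma Om2_derive omega
  (Homega : forall x, 0 <= x <= 1 ->
     filterlim omega (within (fun y => 0 <= y <= 1) (locally x)) (locally (omega x))) t :
  is_derive (Om2 omega) t (omc omega t).
Proof.
  apply (is_derive_RInt (V := R_NormedModule) (omc omega) (Om2 omega) 0).
  - apply filter_forall. intros b. apply (RInt_correct (V := R_CompleteNormedModule)).
    apply (ex_RInt_continuous (V := R_CompleteNormedModule)). intros; apply omc_cont; auto.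
  - apply omc_cont; auto.
Qed.

Lemma Omc_cont omega
  (Homega : forall x, 0 <= x <= 1 ->
     filterlim omega (within (fun y => 0 <= y <= 1) (locally x)) (locally (omega x))) t :
  continuous (Omc omega) t.
Proof.
  unfold Omc. apply (continuous_comp clamp (Om2 omega)). apply clamp_cont.
  apply (ex_derive_continuous (K := R_AbsRing) (V := R_NormedModule)). eexists. apply Om2_derive; auto.
Qed.

Lemma Omc_eq omega t : 0 <= t <= 1 -> Omc omega t = Omega omega t.
Proof.
  intros Ht. unfold Omc, Om2, Omega. rewrite clamp_id by auto.
  apply RInt_ext. intros x Hx. unfold omc. rewrite clamp_id; auto.
  rewrite Rmin_left in Hx by lra. rewrite Rmax_right in Hx by lra. lra.
Qed.

Lemma Omc_clamp omega t : Omc omega t = Omega omega (clamp t).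
Proof.
  rewrite <- Omc_eq by apply clamp_in. unfold Omc. rewrite (clamp_id (clamp t)); auto. apply clamp_in.
Qed.

Lemma Omc_le omega M (HMmax : forall p, 0 <= p <= 1 -> 2 * Omega omega p <= M) t :
  2 * Omc omega t <= M.
Proof. rewrite Omc_clamp. apply HMmax, clamp_in. Qed.

Lemma M_nonneg omega M (HMmax : forall p, 0 <= p <= 1 -> 2 * Omega omega p <= M) : 0 <= M.
Proof.
  specialize (HMmax 0 ltac:(lra)). unfold Omega in HMmax.
  rewrite (RInt_point (V := R_CompleteNormedModule)) in HMmax. change (2 * 0 <= M) in HMmax. lra.
Qed.

Lemma sqrt_pos_ne u : 0 < u -> sqrt u <> 0.
Proof. intros H. pose proof (sqrt_lt_R0 u H). lra. Qed.

Lemma cont_Q (Q : R -> R) u : 0 < u -> ex_derive Q u -> continuous Q u.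
Proof. intros _ H. apply (ex_derive_continuous (K := R_AbsRing) (V := R_NormedModule)). exact H. Qed.

Lemma exd_invsqrt u : 0 < u -> ex_derive (fun u => / sqrt u) u.
Proof. intros H. auto_derive. split; [exact H|]. split; [apply sqrt_pos_ne; exact H| easy]. Qed.
Lemma exd_sqrt u : 0 < u -> ex_derive sqrt u.
Proof. intros H. auto_derive. exact H. Qed.
Lemma exd_invsqrt3 u : 0 < u -> ex_derive (fun u => / (sqrt u)^3) u.
Proof. intros H. pose proof (sqrt_lt_R0 u H). auto_derive. repeat split; try exact H; try lra.
  intro Hz. assert (0 < sqrt u * (sqrt u * (sqrt u * 1))) by (apply Rmult_lt_0_compat; nra). lra. Qed.

Lemma d_invsqrt u : 0 < u -> is_derive (fun u => / sqrt u) u (- / 2 * / (sqrt u)^3).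
Proof. intros H. pose proof (sqrt_lt_R0 u H). pose proof (sqrt_sqrt u (Rlt_le _ _ H)).
  auto_derive. split; [exact H|]. split; [lra| easy]. field. lra. Qed.
Lemma d_sqrt u : 0 < u -> is_derive sqrt u (/ (2 * sqrt u)).
Proof. intros H. pose proof (sqrt_lt_R0 u H). auto_derive. exact H. field. lra. Qed.

Lemma cont_comp_g (g Q : R -> R) M s :
  (forall t, continuous g t) -> (forall t, g t <= M) -> 0 <= M -> sqrt M < s ->
  (forall u, 0 < u -> ex_derive Q u) -> forall t, continuous (fun t => Q (s^2 - g t)) t.
Proof.
  intros Hg HgM HM Hs HQ t.
  apply (continuous_comp (fun t => s^2 - g t) Q).
  + apply (continuous_minus (K := R_AbsRing) (V := R_NormedModule) (fun _ => s^2) g). apply continuous_const. apply Hg.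
  + apply cont_Q; [|apply HQ]; pose proof (sq_gt M s HM Hs); specialize (HgM t); lra.
Qed.

Lemma exRI_comp_g (g Q : R -> R) M s a b :
  (forall t, continuous g t) -> (forall t, g t <= M) -> 0 <= M -> sqrt M < s ->
  (forall u, 0 < u -> ex_derive Q u) -> ex_RInt (fun t => Q (s^2 - g t)) a b.
Proof.
  intros. apply (ex_RInt_continuous (V := R_CompleteNormedModule)). intros; eapply cont_comp_g; eauto.
Qed.

Definition Dg (g : R -> R) (s : R) : R := RInt (fun t => / sqrt (s^2 - g t)) 0 1.
Definition Jg (g : R -> R) (s : R) : R := RInt (fun t => sqrt (s^2 - g t)) 0 1.
Definition Ig (g : R -> R) (s : R) : R := RInt (fun t => / (sqrt (s^2 - g t))^3) 0 1.

Lemma D_deriv g M s : (forall t, continuous g t) -> (forall t, g t <= M) -> 0 <= M -> sqrt M < s ->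
  is_derive (Dg g) s (- s * Ig g s).
Proof.
  intros Hg HgM HM Hs.
  pose proof (param_deriv (fun _ => 1) g (fun u => / sqrt u) (fun u => - / 2 * / (sqrt u)^3) M s
     (fun t => continuous_const _ t) Hg HgM HM Hs d_invsqrt) as H.
  assert (Hc : forall u, 0 < u -> continuous (fun u => - / 2 * / (sqrt u)^3) u).
  { intros u Hu. apply cont_Q; auto. pose proof (sqrt_lt_R0 u Hu). auto_derive. repeat split; try exact Hu; try lra.
  intro Hz. assert (0 < sqrt u * (sqrt u * (sqrt u * 1))) by (apply Rmult_lt_0_compat; nra). lra. }
  specialize (H Hc).
  eapply is_derive_ext. 2: { unfold Dg.
  replace (- s * Ig g s) with (RInt (fun t => 1 * (2 * s * (- / 2 * / sqrt (s ^ 2 - g t) ^ 3))) 0 1).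
  exact H.
  unfold Ig. rewrite <- (RInt_scal (V := R_CompleteNormedModule)).
  - apply RInt_ext. intros x _. change (1 * (2 * s * (- / 2 * / sqrt (s ^ 2 - g x) ^ 3)) = - s * / sqrt (s ^ 2 - g x) ^ 3). field. apply sqrt_pos_ne. pose proof (sq_gt M s HM Hs); specialize (HgM x); lra.
  - apply (ex_RInt_continuous (V := R_CompleteNormedModule)). intros; apply (cont_comp_g g (fun u => / sqrt u ^ 3) M); auto. apply exd_invsqrt3. }
  intros t. unfold Dg. apply RInt_ext. intros x _. simpl. ring.
Qed.

Lemma J_deriv g M s : (forall t, continuous g t) -> (forall t, g t <= M) -> 0 <= M -> sqrt M < s ->
  is_derive (Jg g) s (s * Dg g s).
Proof.
  intros Hg HgM HM Hs.
  pose proof (param_deriv (fun _ => 1) g sqrt (fun u => / (2 * sqrt u)) M s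
     (fun t => continuous_const _ t) Hg HgM HM Hs d_sqrt) as H.
  assert (Hc : forall u, 0 < u -> continuous (fun u => / (2 * sqrt u)) u).
  { intros u Hu. apply cont_Q; auto. auto_derive. split; [exact Hu|]. split; [|easy].
    pose proof (sqrt_lt_R0 u Hu). lra. }
  specialize (H Hc).
  eapply is_derive_ext. 2: {
  replace (s * Dg g s) with (RInt (fun t => 1 * (2 * s * (/ (2 * sqrt (s ^ 2 - g t))))) 0 1).
  exact H.
  unfold Dg. rewrite <- (RInt_scal (V := R_CompleteNormedModule)).
  - apply RInt_ext. intros x _. change (1 * (2 * s * / (2 * sqrt (s ^ 2 - g x))) = s * / sqrt (s ^ 2 - g x)).
    field. apply sqrt_pos_ne. pose proof (sq_gt M s HM Hs); specialize (HgM x); lra.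
  - apply (ex_RInt_continuous (V := R_CompleteNormedModule)). intros; apply (cont_comp_g g (fun u => / sqrt u) M); auto. apply exd_invsqrt. }
  intros t. unfold Jg. apply RInt_ext. intros x _. simpl. ring.
Qed.

Lemma I_decr g M a b : (forall t, continuous g t) -> (forall t, g t <= M) -> 0 <= M -> sqrt M < a -> a < b ->
  Ig g b < Ig g a.
Proof.
  intros Hg HgM HM Ha Hab. unfold Ig. apply RInt_lt. lra.
  - intros; apply (cont_comp_g g (fun u => / sqrt u ^ 3) M); auto. apply exd_invsqrt3.
  - intros; apply (cont_comp_g g (fun u => / sqrt u ^ 3) M); auto. lra. apply exd_invsqrt3.
  - intros x _. pose proof (sq_gt M a HM Ha). specialize (HgM x).
    assert (0 < a) by (pose proof (sqrt_pos M); lra).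
    assert (a^2 < b^2) by nra.
    assert (sqrt (a^2 - g x) < sqrt (b^2 - g x)) by (apply sqrt_lt_1_alt; lra).
    pose proof (sqrt_lt_R0 (a^2 - g x) ltac:(lra)).
    set (p := sqrt (a ^ 2 - g x)) in *. set (q := sqrt (b ^ 2 - g x)) in *.
    apply Rinv_lt_contravar.
    + apply Rmult_lt_0_compat; apply pow_lt; lra.
    + assert (p^2 < q^2) by nra. nra.
Qed.

Lemma Rminus_eq' (a b : R) : minus a b = a - b.
Proof. reflexivity. Qed.

Lemma HA_int g M s : (forall t, continuous g t) -> (forall t, g t <= M) -> 0 <= M -> sqrt M < s ->
  is_RInt (fun p => RInt (fun tau => / sqrt (s^2 - g tau)) 0 p * / sqrt (s^2 - g p)) 0 1 (Dg g s ^ 2 / 2).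
Proof.
  intros Hg HgM HM Hs.
  set (A := fun t => / sqrt (s^2 - g t)).
  set (Hc := fun p => RInt A 0 p).
  assert (HAc : forall t, continuous A t).
  { intros t. apply (cont_comp_g g (fun u => / sqrt u) M); auto. apply exd_invsqrt. }
  assert (Hd : forall p, is_derive Hc p (A p)).
  { intros p. apply (is_derive_RInt (V := R_NormedModule) A Hc 0).
    - apply filter_forall. intros b. apply (RInt_correct (V := R_CompleteNormedModule)).
      apply (ex_RInt_continuous (V := R_CompleteNormedModule)). intros; apply HAc.
    - apply HAc. }
  assert (E : Dg g s ^ 2 / 2 = minus (Hc 1 ^ 2 / 2) (Hc 0 ^ 2 / 2)).
  { assert (H0 : Hc 0 = 0) by apply (RInt_point (V := R_CompleteNormedModule)).
    rewrite H0. rewrite Rminus_eq'. assert (H1 : Hc 1 = Dg g s) by reflexivity. rewrite H1. unfold Rdiv; simpl; lra. }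
  rewrite E.
  apply (is_RInt_derive (V := R_CompleteNormedModule) (fun p => Hc p ^ 2 / 2) (fun p => Hc p * A p)).
  - intros x _.
    assert (H1 := is_derive_pow Hc 2 x (A x) (Hd x)).
    assert (H2 := is_derive_scal (fun p => Hc p ^ 2) x (/2) _ H1).
    eapply is_derive_ext; [| replace (Hc x * A x) with (/ 2 * (INR 2 * A x * Hc x ^ Init.Nat.pred 2)); [exact H2|] ].
    + intros t; simpl; field.
    + simpl; field.
  - intros x _. apply (continuous_mult (K := R_AbsRing) Hc A).
    + apply (ex_derive_continuous (K := R_AbsRing) (V := R_NormedModule)). eexists; apply Hd.
    + apply HAc.
Qed.

Theorem lemma3p7
  (omega : R -> R)
  (Homega : forall x, 0 <= x <= 1 ->
     filterlim omega (within (fun y => 0 <= y <= 1) (locally x)) (locally (omega x)))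
  (M s0 : R)
  (HMattained : exists p, 0 <= p <= 1 /\ 2 * Omega omega p = M)
  (HMmax : forall p, 0 <= p <= 1 -> 2 * Omega omega p <= M)
  (Hs0 : s0 = sqrt M)
  (sc : R) (Hsc0 : s0 < sc)
  (Hsc : RInt (fun p => / (sqrt (sc ^ 2 - 2 * Omega omega p)) ^ 3) 0 1 = 1)
  (Rc : R) (HRc : Rc = Rfun omega sc)
  (R0 : Rbar) (HR0 : filterlim (Rfun omega) (at_right s0) (Rbar_locally R0))
  (r : R) (Hr1 : Rc < r) (Hr2 : Rbar_lt r R0)
  (sm sp : R) (Hsm : s0 < sm < sc) (Hsp : sc < sp)
  (HRsm : Rfun omega sm = r) (HRsp : Rfun omega sp = r)
  (F : R) :
  (forall s1 s2, s0 < s1 -> s1 < s2 -> s2 < sm ->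
     kappa omega F s2 r < kappa omega F s1 r) /\
  (forall s1 s2, sm < s1 -> s1 < s2 -> s2 < sp ->
     kappa omega F s1 r < kappa omega F s2 r) /\
  (forall s1 s2, sp < s1 -> s1 < s2 ->
     kappa omega F s2 r < kappa omega F s1 r) /\
  is_lim (fun s => kappa omega F s r) p_infty m_infty.
Proof.
  subst s0. clear HR0 Hr2 R0 HMattained.
  set (g := fun t => 2 * Omc omega t).
  assert (Hg : forall t, continuous g t).
  { intros t. apply (continuous_mult (K := R_AbsRing) (fun _ => 2) (Omc omega)).
    apply continuous_const. apply Omc_cont; auto. }
  assert (HgM : forall t, g t <= M) by (intros t; apply (Omc_le omega M HMmax)).
  assert (HM : 0 <= M) by (apply (M_nonneg omega M HMmax)).
  assert (Hgeq : forall t, 0 <= t <= 1 -> g t = 2 * Omega omega t).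
  { intros t Ht. unfold g. rewrite Omc_eq; auto. }
  clearbody g.
  assert (HdD : forall s, d omega s = Dg g s).
  { intros s. unfold d, H, Hp, Dg. apply RInt_ext. intros x Hx.
    rewrite Rmin_left in Hx by lra. rewrite Rmax_right in Hx by lra.
    rewrite Hgeq; auto; lra. }
  assert (HRf : forall s, Rfun omega s = s^2/2 - Omega omega 1 + Dg g s).
  { intros s. unfold Rfun. rewrite HdD. reflexivity. }
  assert (Hpos : forall s t, sqrt M < s -> 0 < s^2 - g t).
  { intros s t Hs. pose proof (sq_gt M s HM Hs). specialize (HgM t). lra. }
  assert (HsP : forall s, sqrt M < s -> 0 < s).
  { intros s Hs. pose proof (sqrt_pos M). lra. }
  assert (Hsig : forall s, sqrt M < s -> Defs.sigma omega s r =
      Jg g s - Dg g s ^ 2 / 2 + (Omega omega 1 + r - s^2/2) * Dg g s).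
  { intros s Hs. unfold Defs.sigma.
    set (c := Omega omega 1 + r - s^2/2).
    rewrite (RInt_ext _ (fun p => plus (minus (sqrt (s^2 - g p))
        (RInt (fun tau => / sqrt (s^2 - g tau)) 0 p * / sqrt (s^2 - g p)))
        (scal c (/ sqrt (s^2 - g p))))).
    - apply is_RInt_unique.
      apply (is_RInt_plus (V := R_NormedModule)).
      + apply (is_RInt_minus (V := R_NormedModule)).
        * apply (RInt_correct (V := R_CompleteNormedModule)).
          apply (ex_RInt_continuous (V := R_CompleteNormedModule)). intros; apply (cont_comp_g g sqrt M); auto. apply exd_sqrt.
        * apply (HA_int g M s); auto.
      + apply (is_RInt_scal (V := R_NormedModule)).
        apply (RInt_correct (V := R_CompleteNormedModule)).
        apply (ex_RInt_continuous (V := R_CompleteNormedModule)). intros; apply (cont_comp_g g (fun u => / sqrt u) M); auto. apply exd_invsqrt.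
    - intros x Hx. rewrite Rmin_left in Hx by lra. rewrite Rmax_right in Hx by lra.
      assert (HH : H omega x s = RInt (fun tau => / sqrt (s^2 - g tau)) 0 x).
      { unfold H, Hp. apply RInt_ext. intros y Hy.
        rewrite Rmin_left in Hy by lra. rewrite Rmax_right in Hy by lra.
        rewrite Hgeq; auto; lra. }
      rewrite HH. unfold Hp. rewrite <- Hgeq by lra.
      set (h := RInt _ 0 x).
      assert (Hq := sqrt_lt_R0 _ (Hpos s x Hs)).
      assert (Hqq := sqrt_sqrt _ (Rlt_le _ _ (Hpos s x Hs))).
      set (q := sqrt (s ^ 2 - g x)) in *.
      assert (Ho : Omega omega x = (s^2 - q * q) / 2).
      { rewrite Hqq. rewrite Hgeq by lra. field. }
      rewrite Ho. unfold c. change (plus (minus q (h * / q)) (scal (Omega omega 1 + r - s ^ 2 / 2) (/ q)))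
        with (q - h * / q + (Omega omega 1 + r - s ^ 2 / 2) * / q).
      match goal with |- ?a = ?b => change (@eq R a b) end. field. lra. }

  set (K := fun s => 2 * (F - (Jg g s - Dg g s ^ 2 / 2 + (Omega omega 1 + r - s^2/2) * Dg g s))
                     - (r - (s^2/2 - Omega omega 1 + Dg g s))^2).
  assert (Hkap : forall s, sqrt M < s -> kappa omega F s r = K s).
  { intros s Hs. unfold kappa, K. rewrite Hsig by auto. rewrite HRf. reflexivity. }
  assert (HKd : forall s, sqrt M < s -> is_derive K s (2 * s * (r - Rfun omega s))).
  { intros s Hs. pose proof (D_deriv g M s Hg HgM HM Hs) as HD.
    pose proof (J_deriv g M s Hg HgM HM Hs) as HJ.
    unfold K. auto_derive.
    - split; [eexists; exact HJ|]. split; [eexists; exact HD|]. split; [eexists; exact HD|].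
      split; [eexists; exact HD|]. easy.
      replace (Derive (fun x => Dg g x) s) with (- s * Ig g s) by (symmetry; apply is_derive_unique; exact HD). replace (Derive (fun x => Jg g x) s) with (s * Dg g s) by (symmetry; apply is_derive_unique; exact HJ). rewrite HRf. field. }
  assert (Hkd : forall s, sqrt M < s -> is_derive (fun s => kappa omega F s r) s (2 * s * (r - Rfun omega s))).
  { intros s Hs. apply (is_derive_ext_loc K). 
    - eapply filter_imp; [| apply (open_gt (sqrt M) s Hs)]. intros y Hy. symmetry. apply Hkap. exact Hy.
    - apply HKd; auto. }
  assert (HRd : forall s, sqrt M < s -> is_derive (Rfun omega) s (s * (1 - Ig g s))).
  { intros s Hs. pose proof (D_deriv g M s Hg HgM HM Hs) as HD.
    apply (is_derive_ext (fun s => s^2/2 - Omega omega 1 + Dg g s)).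
    - intros t. symmetry. apply HRf.
    - auto_derive. eexists; exact HD. replace (Derive (fun x => Dg g x) s) with (- s * Ig g s) by (symmetry; apply is_derive_unique; exact HD). field. }
  assert (HIsc : Ig g sc = 1).
  { rewrite <- Hsc. unfold Ig. apply RInt_ext. intros x Hx.
    rewrite Rmin_left in Hx by lra. rewrite Rmax_right in Hx by lra.
    rewrite Hgeq; auto; lra. }
  assert (HI1 : forall s, sqrt M < s -> s <= sc -> 1 <= Ig g s).
  { intros s Hs Hs2. destruct (Req_dec s sc). subst; lra.
    rewrite <- HIsc. left. apply (I_decr g M); auto; lra. }
  assert (HI1s : forall s, sqrt M < s -> s < sc -> 1 < Ig g s).
  { intros s Hs Hs2. rewrite <- HIsc. apply (I_decr g M); auto; lra. }
  assert (HI2 : forall s, sc <= s -> Ig g s <= 1).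
  { intros s Hs2. destruct (Req_dec s sc). subst; lra.
    rewrite <- HIsc. left. apply (I_decr g M); auto; lra. }
  assert (HI2s : forall s, sc < s -> Ig g s < 1).
  { intros s Hs2. rewrite <- HIsc. apply (I_decr g M); auto; lra. }
  assert (Rdecr : forall a b, sqrt M < a -> a < b -> b <= sc -> Rfun omega b < Rfun omega a).
  { intros a b Ha Hab Hb. apply (strict_decr _ (fun s => s * (1 - Ig g s))); auto.
    - intros x Hx. apply HRd. lra.
    - intros x Hx. assert (0 < x) by (apply HsP; lra). specialize (HI1 x ltac:(lra) ltac:(lra)). nra.
    - intros x Hx. assert (0 < x) by (apply HsP; lra). specialize (HI1s x ltac:(lra) ltac:(lra)). nra. }
  assert (Rincr : forall a b, sc <= a -> a < b -> Rfun omega a < Rfun omega b).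
  { intros a b Ha Hab. apply (strict_incr _ (fun s => s * (1 - Ig g s))); auto.
    - intros x Hx. apply HRd. lra.
    - intros x Hx. assert (0 < x) by (apply HsP; lra). specialize (HI2 x ltac:(lra)). nra.
    - intros x Hx. assert (0 < x) by (apply HsP; lra). specialize (HI2s x ltac:(lra)). nra. }
  assert (R1 : forall s, sqrt M < s -> s < sm -> r < Rfun omega s).
  { intros s Hs Hs2. rewrite <- HRsm. apply Rdecr; lra. }
  assert (R2 : forall s, sm < s -> s < sp -> Rfun omega s < r).
  { intros s Hs Hs2. destruct (Rle_lt_dec s sc).
    - rewrite <- HRsm. apply Rdecr; lra.
    - rewrite <- HRsp. apply Rincr; lra. }
  assert (R3 : forall s, sp < s -> r < Rfun omega s).
  { intros s Hs. rewrite <- HRsp. apply Rincr; lra. }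
  split; [|split; [|split]].
  - intros s1 s2 H1 H12 H2.
    apply (strict_decr (fun x => kappa omega F x r) (fun s => 2 * s * (r - Rfun omega s))); auto.
    + intros x Hx. apply Hkd. lra.
    + intros x Hx. assert (0 < x) by (apply HsP; lra). specialize (R1 x ltac:(lra) ltac:(lra)). nra.
    + intros x Hx. assert (0 < x) by (apply HsP; lra). specialize (R1 x ltac:(lra) ltac:(lra)). nra.
  - intros s1 s2 H1 H12 H2.
    apply (strict_incr (fun x => kappa omega F x r) (fun s => 2 * s * (r - Rfun omega s))); auto.
    + intros x Hx. apply Hkd. lra.
    + intros x Hx. assert (0 < x) by (apply HsP; lra). specialize (R2 x ltac:(lra) ltac:(lra)). nra.
    + intros x Hx. assert (0 < x) by (apply HsP; lra). specialize (R2 x ltac:(lra) ltac:(lra)). nra.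
  - intros s1 s2 H1 H12.
    apply (strict_decr (fun x => kappa omega F x r) (fun s => 2 * s * (r - Rfun omega s))); auto.
    + intros x Hx. apply Hkd. lra.
    + intros x Hx. assert (0 < x) by (apply HsP; lra). specialize (R3 x ltac:(lra)). nra.
    + intros x Hx. assert (0 < x) by (apply HsP; lra). specialize (R3 x ltac:(lra)). nra.
  - set (s1 := sp + 1).
    set (c := 2 * s1 * (Rfun omega s1 - r)).
    assert (Hs1 : 0 < s1) by (apply HsP; unfold s1; lra).
    assert (Hc : 0 < c). { unfold c. specialize (R3 s1 ltac:(unfold s1; lra)). nra. }
    assert (Hbd : forall s, s1 <= s -> kappa omega F s r <= kappa omega F s1 r - c * (s - s1)).
    { intros s Hs.
      assert (kappa omega F s r + c * (s - s1) <= kappa omega F s1 r + c * (s1 - s1)).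
      { apply (weak_decr (fun x => kappa omega F x r + c * (x - s1)) (fun x => 2 * x * (r - Rfun omega x) + c)); auto.
        - intros x Hx. apply (is_derive_plus (K := R_AbsRing) (V := R_NormedModule)
             (fun x => kappa omega F x r) (fun x => c * (x - s1))).
          + apply Hkd. unfold s1 in *; lra.
          + auto_derive; [easy|ring].
        - intros x Hx. assert (Rfun omega s1 <= Rfun omega x).
          { destruct (Req_dec x s1). subst; lra. left; apply Rincr; unfold s1 in *; lra. }
          assert (r < Rfun omega s1) by (apply R3; unfold s1; lra). unfold c. assert (0 <= (x - s1) * (Rfun omega x - r)) by (apply Rmult_le_pos; lra). assert (0 <= s1 * (Rfun omega x - Rfun omega s1)) by (apply Rmult_le_pos; lra). nra. }
      lra. }
    unfold is_lim, filterlim, filter_le, filtermap. intros P [N HN].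
    exists (Rmax s1 (s1 + (kappa omega F s1 r - N) / c)).
    intros s Hs. apply HN.
    assert (s1 < s) by (eapply Rle_lt_trans; [apply Rmax_l| exact Hs]).
    assert (s1 + (kappa omega F s1 r - N) / c < s) by (eapply Rle_lt_trans; [apply Rmax_r| exact Hs]).
    specialize (Hbd s ltac:(lra)).
    assert ((kappa omega F s1 r - N) < c * (s - s1)).
    { assert (Hq : (kappa omega F s1 r - N) / c < s - s1) by lra.
      apply Rmult_lt_compat_l with (r := c) in Hq; auto.
      replace (c * ((kappa omega F s1 r - N) / c)) with (kappa omega F s1 r - N) in Hq by (field; lra). lra. }
    lra.
Qed.
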